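(* Let $S$ be a closed densely defined symmetric operator on a Hilbert space $\mathcal{H}$ and $V\ge0$ a bounded non-negative operator, and let $A:=S+iV$ with $\mathcal{D}(A)=\mathcal{D}(S)$. If $B$ is an operator extension of $A$ ($A\subset B$) that is dissipative, then $\mathcal{D}(B)\subset\mathcal{D}(S^* )$.
   Context: The inner product is antilinear in the first argument. A densely defined operator $B$ is dissipative if $\mathrm{Im}\langle\psi,B\psi\rangle\ge0$ for all $\psi\in\mathcal{D}(B)$. *)

(* Defs.v *)
From HB Require Import structures.
From mathcomp Require Import all_boot all_order all_algebra.
From mathcomp Require Import complex.
From mathcomp Require Import reals.
Set Implicit Arguments. Unset Strict Implicit. Unset Printing Implicit Defensive.
Import Order.TTheory GRing.Theory Num.Theory.
Local Open Scope ring_scope.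

Section Hilbert.
Variables (R : realType) (H : lmodType R[i]) (ip : H -> H -> R[i]).

(* inner product: antilinear in the first argument, linear in the second *)
Definition is_inner_product : Prop :=
  [/\ (forall x y z, ip x (y + z) = ip x y + ip x z),
      (forall (a : R[i]) x y, ip x (a *: y) = a * ip x y),
      (forall x y, ip y x = ((ip x y)^*)%C),
      (forall x, 0 <= ip x x) &
      (forall x, ip x x = 0 -> x = 0)].

Definition hnorm (x : H) : R := Num.sqrt (complex.Re (ip x x)).

Definition cvgH (u : nat -> H) (l : H) : Prop :=
  forall e : R, 0 < e -> exists N, forall n, (N <= n)%N -> hnorm (u n - l) < e.

Definition cauchyH (u : nat -> H) : Prop :=
  forall e : R, 0 < e -> exists N, forall m n, (N <= m)%N -> (N <= n)%N ->
    hnorm (u m - u n) < e.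

Definition is_hilbert : Prop :=
  is_inner_product /\ forall u, cauchyH u -> exists l, cvgH u l.

Definition subspace (D : H -> Prop) : Prop :=
  D 0 /\ forall (a : R[i]) x y, D x -> D y -> D (a *: x + y).

Definition is_linop (D : H -> Prop) (T : H -> H) : Prop :=
  subspace D /\
  forall (a : R[i]) x y, D x -> D y -> T (a *: x + y) = a *: T x + T y.

Definition densely_defined (D : H -> Prop) : Prop :=
  forall x (e : R), 0 < e -> exists y, D y /\ hnorm (x - y) < e.

Definition closed_op (D : H -> Prop) (T : H -> H) : Prop :=
  forall (u : nat -> H) x y, (forall n, D (u n)) -> cvgH u x ->
    cvgH (fun n => T (u n)) y -> D x /\ T x = y.

Definition symmetric_op (D : H -> Prop) (T : H -> H) : Prop :=
  forall x y, D x -> D y -> ip (T x) y = ip x (T y).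

Definition adjoint_dom (D : H -> Prop) (T : H -> H) (y : H) : Prop :=
  exists z, forall x, D x -> ip (T x) y = ip x z.

Definition bounded_op (V : H -> H) : Prop :=
  (forall (a : R[i]) x y, V (a *: x + y) = a *: V x + V y) /\
  exists M : R, forall x, hnorm (V x) <= M * hnorm x.

Definition nonneg_op (V : H -> H) : Prop := forall x, 0 <= ip x (V x).

Definition op_extends (DA : H -> Prop) (A : H -> H) (DB : H -> Prop) (B : H -> H) :=
  forall x, DA x -> DB x /\ B x = A x.

Definition dissipative (D : H -> Prop) (B : H -> H) : Prop :=
  forall psi, D psi -> 0 <= complex.Im (ip psi (B psi)).

End Hilbert.

(* Main.v *)
From HB Require Import structures.
From mathcomp Require Import all_boot all_order all_algebra.
From mathcomp Require Import complex.
From mathcomp Require Import boolp classical_sets reals.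
From mathcomp Require Import ring lra.
Require Import Defs.
Import Order.TTheory GRing.Theory Num.Theory.
Local Open Scope ring_scope.
Set Implicit Arguments. Unset Strict Implicit. Unset Printing Implicit Defensive.
Section C.
Variable R : realType.
Lemma ReM (x y : R[i]) : complex.Re (x * y) = complex.Re x * complex.Re y - complex.Im x * complex.Im y.
Proof. by case: x => a b; case: y => c d. Qed.
Lemma ImM (x y : R[i]) : complex.Im (x * y) = complex.Re x * complex.Im y + complex.Im x * complex.Re y.
Proof. by case: x => a b; case: y => c d. Qed.
Lemma ReD (x y : R[i]) : complex.Re (x + y) = complex.Re x + complex.Re y.
Proof. by case: x => a b; case: y => c d. Qed.
Lemma ImD (x y : R[i]) : complex.Im (x + y) = complex.Im x + complex.Im y.
Proof. by case: x => a b; case: y => c d. Qed.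
Lemma ReN (x : R[i]) : complex.Re (- x) = - complex.Re x.
Proof. by case: x. Qed.
Lemma ImN (x : R[i]) : complex.Im (- x) = - complex.Im x.
Proof. by case: x. Qed.
Lemma ReJ (x : R[i]) : complex.Re (x^*)%C = complex.Re x.
Proof. by case: x. Qed.
Lemma ImJ (x : R[i]) : complex.Im (x^*)%C = - complex.Im x.
Proof. by case: x. Qed.
Lemma Rei : complex.Re ('i%C : R[i]) = 0. Proof. by []. Qed.
Lemma Imi : complex.Im ('i%C : R[i]) = 1. Proof. by []. Qed.
Lemma ReC (r : R) : complex.Re (r%:C)%C = r. Proof. by []. Qed.
Lemma ImC (r : R) : complex.Im (r%:C)%C = 0. Proof. by []. Qed.
Lemma Re0 : complex.Re (0 : R[i]) = 0. Proof. by []. Qed.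
Lemma Im0 : complex.Im (0 : R[i]) = 0. Proof. by []. Qed.
Lemma ge0_ReIm (x : R[i]) : 0 <= x -> complex.Im x = 0 /\ 0 <= complex.Re x.
Proof. by case: x => a b; rewrite lecE /= => /andP[/eqP -> ->]. Qed.
Lemma complex_ext (x y : R[i]) : complex.Re x = complex.Re y -> complex.Im x = complex.Im y -> x = y.
Proof. by case: x => a b; case: y => c d /= -> ->. Qed.
Lemma conjD (x y : R[i]) : ((x + y)^*)%C = (x^*)%C + (y^*)%C.
Proof. by case: x => a b; case: y => c d; apply: complex_ext => /=; rewrite ?opprD. Qed.
Lemma conjM (x y : R[i]) : ((x * y)^*)%C = (x^*)%C * (y^*)%C.
Proof. case: x => a b; case: y => c d; apply: complex_ext => /=; lra. Qed.
Lemma conjN (x : R[i]) : ((- x)^*)%C = - (x^*)%C.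
Proof. by case: x => a b; apply: complex_ext. Qed.
End C.
Section Hil.
Variables (R : realType) (H : lmodType R[i]) (ip : H -> H -> R[i]).
Hypothesis hip : is_inner_product ip.
Local Notation Re := complex.Re.
Local Notation Im := complex.Im.
Definition n2 (x : H) : R := Re (ip x x).

Lemma ipDr x y z : ip x (y + z) = ip x y + ip x z.
Proof. by case: hip. Qed.
Lemma ipZr (a : R[i]) x y : ip x (a *: y) = a * ip x y.
Proof. by case: hip. Qed.
Lemma ipC x y : ip y x = ((ip x y)^*)%C.
Proof. by case: hip. Qed.
Lemma ipDl x y z : ip (y + z) x = ip y x + ip z x.
Proof. by rewrite [LHS]ipC ipDr conjD -!ipC. Qed.
Lemma ipZl (a : R[i]) x y : ip (a *: y) x = (a^*)%C * ip y x.
Proof. by rewrite [LHS]ipC ipZr conjM -ipC. Qed.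
Lemma ip0r x : ip x 0 = 0.
Proof. have h := ipDr x 0 0; rewrite addr0 in h. by apply: (addrI (ip x 0)); rewrite [RHS]addr0 -h. Qed.
Lemma ip0l x : ip 0 x = 0.
Proof. by rewrite ipC ip0r; apply: complex_ext => /=; rewrite ?oppr0. Qed.
Lemma ipNr x y : ip x (- y) = - ip x y.
Proof. by rewrite -scaleN1r ipZr mulN1r. Qed.
Lemma ipNl x y : ip (- y) x = - ip y x.
Proof. by rewrite [LHS]ipC ipNr conjN -ipC. Qed.
Lemma ipBr x y z : ip x (y - z) = ip x y - ip x z.
Proof. by rewrite ipDr ipNr. Qed.
Lemma ipBl x y z : ip (y - z) x = ip y x - ip z x.
Proof. by rewrite ipDl ipNl. Qed.
Lemma Im_ipxx x : Im (ip x x) = 0.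
Proof. by case: hip => _ _ _ /(_ x) /ge0_ReIm []. Qed.
Lemma n2_ge0 x : 0 <= n2 x.
Proof. by case: hip => _ _ _ /(_ x) /ge0_ReIm []. Qed.
Lemma Re_ipC x y : Re (ip y x) = Re (ip x y).
Proof. by rewrite ipC ReJ. Qed.
Lemma Im_ipC x y : Im (ip y x) = - Im (ip x y).
Proof. by rewrite ipC ImJ. Qed.
Lemma n2D u v : n2 (u + v) = n2 u + n2 v + 2 * Re (ip u v).
Proof. rewrite /n2 ipDl !ipDr !ReD Re_ipC; lra. Qed.
Lemma n2B u v : n2 (u - v) = n2 u + n2 v - 2 * Re (ip u v).
Proof. rewrite /n2 ipDl !ipDr !ipNr !ipNl opprK !ReD !ReN Re_ipC; lra. Qed.
Lemma n2Z (c : R[i]) u : n2 (c *: u) = (Re c ^+ 2 + Im c ^+ 2) * n2 u.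
Proof.
rewrite /n2 ipZl ipZr mulrA ReM Im_ipxx mulr0 subr0 ReM ReJ ImJ; ring.
Qed.
Lemma Re_ip_le u v : 2 * Re (ip u v) <= n2 u + n2 v.
Proof. have := n2_ge0 (u - v); rewrite n2B; lra. Qed.
Lemma disc (al be ga : R) : 0 <= ga -> (forall t, 0 <= al + be * t + ga * t ^+ 2) ->
  be ^+ 2 <= 4 * al * ga.
Proof.
move=> g0 h; have [gz|gp] := eqVneq ga 0.
  have -> : be = 0.
    apply/eqP; apply/negPn/negP => bn.
    have := h (- (al + 1) / be); rewrite gz mul0r addr0 mulrCA mulfV // mulr1; lra.
  by rewrite gz expr2 !mulr0.
have gp' : 0 < ga by rewrite lt_def gp g0.
have := h (- be / (2 * ga)).
have e : ga * (- be / (2 * ga)) = - be / 2 by field; apply/negP => /eqP; lra.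
set t := (- be / (2 * ga)) => ht.
have : 0 <= 4 * ga * (al + be * t + ga * t ^+ 2) by apply: mulr_ge0 => //; lra.
have -> : 4 * ga * (al + be * t + ga * t ^+ 2) = 4 * al * ga + 4 * be * (ga * t) + 4 * (ga * t) ^+ 2.
  by ring.
rewrite e; move=> hh; nra.
Qed.

Lemma CS u v : Re (ip u v) ^+ 2 <= n2 u * n2 v.
Proof.
have := @disc (n2 v) (2 * Re (ip u v)) (n2 u) (n2_ge0 u).
have h : forall t : R, n2 ((t%:C)%C *: u + v) = n2 v + 2 * Re (ip u v) * t + n2 u * t ^+ 2.
  move=> t; rewrite n2D n2Z ipZl ReM /=.
  ring.
have hq : forall t, 0 <= n2 v + 2 * Re (ip u v) * t + n2 u * t ^+ 2.
  by move=> t; rewrite -h; apply: n2_ge0.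
move/(_ hq).
move=> hh; nra.
Qed.
Lemma hnorm_lt e x : 0 < e -> (hnorm ip x < e) = (n2 x < e ^+ 2).
Proof.
move=> e0; rewrite /hnorm -[X in _ < X](@gtr0_norm _ e) // -sqrtr_sqr ltr_sqrt //.
by rewrite exprn_gt0.
Qed.

Lemma bnd_n2 (V : H -> H) (M : R) : (forall x, hnorm ip (V x) <= M * hnorm ip x) ->
  forall x, n2 (V x) <= M ^+ 2 * n2 x.
Proof.
move=> h x; have := h x; rewrite /hnorm => hx.
have a0 : 0 <= Num.sqrt (Re (ip (V x) (V x))) by apply: sqrtr_ge0.
have b0 : 0 <= Num.sqrt (Re (ip x x)) by apply: sqrtr_ge0.
have ha := sqr_sqrtr (n2_ge0 (V x)); have hb := sqr_sqrtr (n2_ge0 x).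
rewrite /n2 in ha hb; rewrite /n2 -ha -hb; nra.
Qed.
End Hil.

Section Lin.
Variables (R : realType) (H : lmodType R[i]) (D : H -> Prop) (T : H -> H).
Hypothesis hT : is_linop D T.
Lemma lin0 : T 0 = 0.
Proof.
case: hT => [[D0 _] hl]; have := hl 1 0 0 D0 D0; rewrite !scale1r addr0 => h.
by apply: (addrI (T 0)); rewrite addr0 -h.
Qed.
Lemma linZ a y : D y -> T (a *: y) = a *: T y.
Proof.
case: hT => [[D0 _] hl] Dy; have := hl a y 0 Dy D0; rewrite !addr0 lin0 addr0 //.
Qed.
Lemma linD y z : D y -> D z -> T (y + z) = T y + T z.
Proof.
case: hT => [[D0 _] hl] Dy Dz; have := hl 1 y z Dy Dz; rewrite !scale1r //.
Qed.
Lemma domZ a y : D y -> D (a *: y).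
Proof. case: hT => [[D0 hs] _] Dy; have := hs a y 0 Dy D0; rewrite addr0 //. Qed.
Lemma domD y z : D y -> D z -> D (y + z).
Proof. case: hT => [[D0 hs] _] Dy Dz; have := hs 1 y z Dy Dz; rewrite scale1r //. Qed.
End Lin.

Lemma small_le0 (R : realType) (x C : R) : 0 <= C -> (forall e, 0 < e -> x <= C * e) -> x <= 0.
Proof.
move=> C0 h; rewrite leNgt; apply/negP => x0.
have e0 : 0 < x / (2 * (C + 1)) by apply: divr_gt0; lra.
have := h _ e0.
have -> : C * (x / (2 * (C + 1))) = x * (C / (2 * (C + 1))) by rewrite mulrCA mulrA.
have : C / (2 * (C + 1)) < 1.
  rewrite ltr_pdivrMr; last by lra.
  lra.
move=> hl hx; nra.
Qed.

Lemma delta_small (R : realType) (e : R) : 0 < e ->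
  exists N : nat, forall n : nat, (N <= n)%N -> 1 / (n.+1)%:R < e.
Proof.
move=> e0; exists (Num.Def.archi_bound (1 / e)) => n hn.
have := @archi_boundP _ (1 / e) (ltW (divr_gt0 ltr01 e0)).
set N := Num.Def.archi_bound _ => hN.
have hNn : (N%:R : R) <= n%:R by rewrite ler_nat.
have np : (0 : R) < n.+1%:R by rewrite ltr0n.
rewrite ltr_pdivrMr // -ltr_pdivrMl // mulr1.
rewrite -natr1; move: hN; rewrite mul1r; lra.
Qed.
Local Notation Re := complex.Re.
Local Notation Im := complex.Im.

Unset Implicit Arguments.

Theorem lemma6p2 (R : realType) (H : lmodType R[i]) (ip : H -> H -> R[i])
  (DS : H -> Prop) (S : H -> H) (V : H -> H) (DB : H -> Prop) (B : H -> H) :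
  is_hilbert ip ->
  is_linop DS S -> densely_defined ip DS -> closed_op ip DS S ->
  symmetric_op ip DS S ->
  bounded_op ip V -> nonneg_op ip V ->
  is_linop DB B ->
  op_extends DS (fun x => S x + ('i%C : R[i]) *: V x) DB B ->
  dissipative ip DB B ->
  forall x, DB x -> adjoint_dom ip DS S x.
Proof.
move=> [hip hcomp] hS _ _ Ssym [Vlin [M hM]] Vnn hB ext diss x DBx.
have DSDB : forall y, DS y -> DB y := fun y h => (ext y h).1.
have BS : forall y, DS y -> B y = S y + 'i%C *: V y := fun y h => (ext y h).2.
have n2V := bnd_n2 hip hM.
pose f := fun y => ip x (S y).
have fD : forall y z, DS y -> DS z -> f (y + z) = f y + f z.
  by move=> y z Dy Dz; rewrite /f (linD hS) // (ipDr hip).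
have fZ : forall a y, DS y -> f (a *: y) = a * f y.
  by move=> a0 y Dy; rewrite /f (linZ hS) // (ipZr hip).
pose K := Im (ip x (B x)).
pose b : R := 1 + M ^+ 2.
pose a : R := (n2 ip (B x) + n2 ip x) / 2 + K.
have b0 : 0 < b by rewrite /b; have := sqr_ge0 M; lra.
have bound : forall p, DS p -> Re (f p) <= a + b * n2 ip p.
  move=> p Dp.
  have DBp := DSDB p Dp.
  have Dpsi : DB ((- 'i%C) *: p + x) := domD hB (domZ hB _ DBp) DBx.
  have := diss _ Dpsi.
  rewrite (linD hB (domZ hB _ DBp) DBx) (linZ hB _ DBp) BS //.
  rewrite !(ipDl hip, ipDr hip, ipZl hip, ipZr hip) !(ImD, ImM, ReM, ReD).
  rewrite !(ReJ, ImJ, ReN, ImN) !(Rei, Imi).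
  have hSp : Im (ip p (S p)) = 0.
    have := Im_ipC hip p (S p); rewrite Ssym //; lra.
  have hVp : Im (ip p (V p)) = 0 := (ge0_ReIm (Vnn p)).1.
  have h1 := Re_ip_le hip p (V p).
  have h2 := Re_ip_le hip p (B x).
  have h3 := Re_ip_le hip x ((- 'i%C) *: V p).
  rewrite (ipZr hip) ReM n2Z // !(ReN, ImN, Rei, Imi) in h3.
  have h4 := n2V p.
  rewrite /f /a /b /K hSp hVp.
  have -> : (1 + M ^+ 2) * n2 ip p = n2 ip p + M ^+ 2 * n2 ip p by ring.
  move: h4 h3; set q := M ^+ 2 * n2 ip p.
  rewrite !expr2.
  lra.
have DS0 : DS 0 by case: hS => [[]].
pose J := fun y => b * n2 ip y - Re (f y).
have Jlb : forall y, DS y -> - a <= J y.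
  by move=> y Dy; have := bound y Dy; rewrite /J; lra.
pose E : set R := fun r => exists y, DS y /\ r = J y.
have hinf : has_inf E.
  split; first by exists (J 0); exists 0.
  by exists (- a) => r [y [Dy ->]]; apply: Jlb.
pose m := inf E.
have mle : forall y, DS y -> m <= J y.
  by move=> y Dy; apply: (ge_inf hinf.2); exists y.
have hseq : forall n : nat, exists y, DS y /\ J y < m + 1 / (n.+1)%:R.
  move=> n; have dp : (0:R) < 1 / (n.+1)%:R by rewrite divr_gt0 // ltr0n.
  by have [r [y [Dy ->]] hr] := inf_adherent dp hinf; exists y.
case: (choice hseq) => yn hyn.
pose c := ((2^-1 : R)%:C)%C.
have Jmid : forall y z, DS y -> DS z ->
    b * n2 ip (y - z) / 2 = J y + J z - 2 * J (c *: (y + z)).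
  move=> y z Dy Dz; rewrite /J (fZ _ _ (domD hS Dy Dz)) (fD _ _ Dy Dz) n2Z // n2B // n2D // ReM ReD /=.
  by field.
have Dyn : forall n, DS (yn n) := fun n => (hyn n).1.
have hcauchy : cauchyH ip yn.
  move=> e e0.
  have e2 : 0 < b * e ^+ 2 / 4 by rewrite divr_gt0 // mulr_gt0 // exprn_gt0.
  have [N hN] := delta_small e2.
  exists N => k l hk hl; rewrite (hnorm_lt ip _ e0).
  have Dm : DS (c *: (yn k + yn l)) := domZ hS _ (domD hS (Dyn k) (Dyn l)).
  have h1 := mle _ Dm.
  have h2 := (hyn k).2; have h3 := (hyn l).2.
  have h4 := hN k hk; have h5 := hN l hl.
  have h6 := Jmid _ _ (Dyn k) (Dyn l).
  rewrite -(ltr_pM2l b0).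
  move: h1 h2 h3 h4 h5 h6.
  set u := J (c *: _); set P := n2 ip _; set Q := b * e ^+ 2.
  set bP := b * P. set dk := 1 / k.+1%:R. set dl := 1 / l.+1%:R. clearbody bP Q u J m dk dl. lra.
case: (hcomp _ hcauchy) => z hz.
have hz' : forall eps, 0 < eps -> exists N, forall n, (N <= n)%N -> n2 ip (yn n - z) < eps.
  move=> eps eps0; have sp : 0 < Num.sqrt eps by rewrite sqrtr_gt0.
  have [N hN] := hz _ sp; exists N => n hn; have := hN n hn.
  by rewrite (hnorm_lt ip _ sp) sqr_sqrtr // ltW.
have key : forall p, DS p -> 2 * b * Re (ip z p) = Re (f p).
  move=> p Dp.
  set d := 2 * b * Re (ip z p) - Re (f p).
  suff : d ^+ 2 <= 0 by rewrite /d; move=> hd; nra.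
  have P0 := n2_ge0 hip p.
  apply: (@small_le0 _ _ (8 * b * (1 + b) * n2 ip p)).
    by apply: mulr_ge0 => //; apply: mulr_ge0; lra.
  move=> eps eps0.
  have [N1 hN1] := delta_small eps0.
  have [N2 hN2] := hz' eps eps0.
  pose n := maxn N1 N2.
  have hn1 := hN1 n (leq_maxl _ _).
  have hn2 := hN2 n (leq_maxr _ _).
  have hJ := (hyn n).2.
  have hJm := mle _ (Dyn n).
  pose cc := 2 * b * Re (ip (yn n) p) - Re (f p).
  have hq : forall t, 0 <= (J (yn n) - m) + cc * t + (b * n2 ip p) * t ^+ 2.
    move=> t; have Dt : DS (yn n + (t%:C)%C *: p) := domD hS (Dyn n) (domZ hS _ Dp).
    have := mle _ Dt.
    have -> : J (yn n + (t%:C)%C *: p) = J (yn n) + cc * t + (b * n2 ip p) * t ^+ 2.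
      rewrite /J /cc (fD _ _ (Dyn n) (domZ hS _ Dp)) (fZ _ _ Dp) n2D // n2Z // (ipZr hip).
      rewrite !(ReM, ReD) /=; ring.
    lra.
  have c2 := disc (mulr_ge0 (ltW b0) P0) hq.
  have cs := CS hip (yn n - z) p.
  rewrite (ipBl hip) ReD ReN in cs.
  set R' := Re (ip (yn n) p) - Re (ip z p) in cs.
  have hd : d = cc - 2 * b * R' by rewrite /d /cc /R'; ring.
  have i0 : d ^+ 2 <= 2 * cc ^+ 2 + 8 * b ^+ 2 * R' ^+ 2.
    rewrite hd; have := sqr_ge0 (cc + 2 * b * R'); nra.
  have i1 : 4 * (J (yn n) - m) * (b * n2 ip p) <= 4 * eps * (b * n2 ip p).
    apply: ler_wpM2r; first by apply: mulr_ge0 => //; lra.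
    apply: ler_wpM2l => //; move: hJ hn1; set dn := 1 / n.+1%:R; clearbody dn J m; lra.
  have i2 : n2 ip (yn n - z) * n2 ip p <= eps * n2 ip p.
    by apply: ler_wpM2r => //; apply: ltW.
  have i3 : b ^+ 2 * R' ^+ 2 <= b ^+ 2 * (eps * n2 ip p).
    by apply: ler_wpM2l; [apply: sqr_ge0 | apply: (le_trans cs)].
  have -> : 8 * b * (1 + b) * n2 ip p * eps = 2 * (4 * eps * (b * n2 ip p)) + 8 * (b ^+ 2 * (eps * n2 ip p)) by ring.
  move: i0 i1 i3 c2; set X1 := 4 * eps * (b * n2 ip p); set X2 := b ^+ 2 * (eps * n2 ip p).
  set X3 := b ^+ 2 * R' ^+ 2; set X4 := 4 * (J (yn n) - m) * (b * n2 ip p).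
  have -> : 8 * b ^+ 2 * R' ^+ 2 = 8 * X3 by rewrite /X3; ring.
  clearbody X1 X2 X3 X4; lra.
exists (((2 * b)%:C)%C *: z) => p Dp.
have k1 := key p Dp.
have k2 := key _ (domZ hS 'i%C Dp).
rewrite (ipZr hip) fZ // !ReM /= in k2.
rewrite /f in k1 k2.
apply: complex_ext.
  rewrite Re_ipC // (ipZr hip) ReM /= (Re_ipC hip z p); lra.
rewrite Im_ipC // (ipZr hip) ImM /= (Im_ipC hip z p); lra.
Qed.
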